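(* If $X$ is a homogeneous ordered compactum, then $\chi_K Nt(X)=\omega$.
   Context: An ordered compactum is a compact space whose topology is the order topology of a linear order. Families of open sets are ordered by inclusion; a family is $\kappa^{\mathrm{op}}$-like if no member is contained in $\kappa$-many members. For $E\subseteq X$, $\chi Nt(E,X)$ is the least $\kappa\geq\omega$ such that $E$ has a $\kappa^{\mathrm{op}}$-like neighborhood base (family of open sets containing $E$ such that every open set containing $E$ contains a member); $\chi_K Nt(X)$ is the supremum of $\chi Nt(K,X)$ over compact $K\subseteq X$. *)

(* Defs.v *)
From HB Require Import structures.
From mathcomp Require Import all_boot all_order all_algebra.
From mathcomp Require Import all_classical all_reals all_analysis.

Set Implicit Arguments.
Unset Strict Implicit.
Unset Printing Implicit Defensive.

Local Open Scope classical_set_scope.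

(* Cardinals are represented by types:
   a cardinal kappa is given as a type K with |K| = kappa. *)

Definition homogeneous (X : topologicalType) : Prop :=
  forall x y : X, exists (f g : X -> X),
    continuous f /\ continuous g /\ cancel f g /\ cancel g f /\ f x = y.

Definition op_like (X : Type) (K : Type) (F : set (set X)) : Prop :=
  forall U, F U -> ~ ([set: K] #<= [set V | F V /\ U `<=` V])%card.

Definition nbhd_base (X : topologicalType) (E : set X) (F : set (set X)) : Prop :=
  (forall U, F U -> open U /\ E `<=` U) /\
  (forall W, open W -> E `<=` W -> exists2 U, F U & U `<=` W).

(* chiNt(E, X) <= |K|  (for infinite K): E has a |K|^op-like neighborhood base *)
Definition chiNt_le (X : topologicalType) (K : Type) (E : set X) : Prop :=
  exists F : set (set X), nbhd_base E F /\ op_like K F.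

Definition chiKNt_le (X : topologicalType) (K : Type) : Prop :=
  forall C : set X, compact C -> chiNt_le K C.

(* Main.v *)
Require Import Defs.
From HB Require Import structures.
From mathcomp Require Import all_boot all_order all_algebra.
From mathcomp Require Import all_classical all_reals all_analysis.
From mathcomp Require Import finmap.
Import Order.TTheory.
Local Open Scope classical_set_scope.
Local Open Scope order_scope.

Section MyCover.
Variables (T : topologicalType) (x0 : T).

Lemma my_compact_In0 (A : set T) : compact A -> forall (I : choiceType) (D : set I) (f : I -> set T),
    closed_fam_of A D f -> finI D f -> \bigcap_(i in D) f i !=set0.
Proof.
move=> Aco I D f [g gcl feAg] finIf.
  case: (pselect (exists i, D i)) => [[i Di] | /asboolP]; last first.
    by rewrite asbool_neg => /forallp_asboolPn D0; exists x0 => ? /D0.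
  have [|p [Ap clfinIfp]] := Aco _ (finI_filter finIf).
    by exists (f i); [apply: finI_from1|rewrite feAg // => ? []].
  exists p => j Dj; rewrite feAg //; split=> //; apply: gcl => // B.
  by apply: clfinIfp; exists (f j); [apply: finI_from1|rewrite feAg // => ? []].
Qed.

Lemma my_compact_cover (A : set T) : compact A -> cover_compact A.
Proof.
move=> Aco; rewrite cover_compactE => I D f [g gop feAg] fcov.
  case: (pselect (exists i, D i)) => [[j Dj] | /asboolP]; last first.
    rewrite asbool_neg => /forallp_asboolPn D0.
    by exists fset0 => // ? /fcov [? /D0].
  apply/exists2P; apply: contrapT.
  move=> /asboolP; rewrite asbool_neg => /forallp_asboolPn sfncov.
  suff [p IAnfp] : \bigcap_(i in D) (A `\` f i) !=set0.
    by have /IAnfp [Ap _] := Dj; have /fcov [k /IAnfp [_]] := Ap.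
  apply: (@my_compact_In0 A Aco).
    exists (fun i => ~` g i) => i Di; first exact/open_closedC/gop.
    rewrite predeqE => p; split=> [[Ap nfip] | [Ap ngip]]; split=> //.
      by move=> gip; apply: nfip; rewrite feAg.
    by rewrite feAg // => - [].
  move=> D' sD.
  have /asboolP : ~ A `<=` cover [set` D'] f by move=> sAIf; exact: (sfncov D').
  rewrite asbool_neg => /existsp_asboolPn [p /asboolP].
  rewrite asbool_neg => /imply_asboolPn [Ap nUfp].
  by exists p => i D'i; split=> // fip; apply: nUfp; exists i.
Qed.
End MyCover.

Section MinMax.
Context {d : Order.disp_t} {X : orderTopologicalType d}.

Lemma seq_min (s : seq X) (a : X) : a \in s ->
  exists2 m, m \in s & forall b, b \in s -> m <= b.
Proof.
elim: s a => [//|x s IH] a; rewrite inE => _.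
case: s IH => [|y s] IH.
  by exists x; rewrite ?inE ?eqxx // => b; rewrite inE => /eqP ->.
have [m ms mmin] := IH y (mem_head _ _).
have [mx|xm] := leP m x.
  exists m; first by rewrite inE ms orbT.
  by move=> b; rewrite inE => /orP[/eqP->//|]; apply: mmin.
exists x; first by rewrite inE eqxx.
move=> b; rewrite inE => /orP[/eqP->//|/mmin]; apply: le_trans; exact: ltW.
Qed.

Lemma seq_max (s : seq X) (a : X) : a \in s ->
  exists2 m, m \in s & forall b, b \in s -> b <= m.
Proof.
elim: s a => [//|x s IH] a; rewrite inE => _.
case: s IH => [|y s] IH.
  by exists x; rewrite ?inE ?eqxx // => b; rewrite inE => /eqP ->.
have [m ms mmin] := IH y (mem_head _ _).
have [mx|xm] := leP x m.
  exists m; first by rewrite inE ms orbT.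
  by move=> b; rewrite inE => /orP[/eqP->//|]; apply: mmin.
exists x; first by rewrite inE eqxx.
move=> b; rewrite inE => /orP[/eqP->//|/mmin] h; apply: le_trans h _; exact: ltW.
Qed.

Lemma compact_min (A : set X) : compact A -> A !=set0 ->
  exists2 m, A m & forall a, A a -> m <= a.
Proof.
move=> cA [a0 Aa0]; apply: contrapT => nomin.
have hA : forall m, A m -> exists2 a, A a & a < m.
  move=> m Am; apply: contrapT => h; apply: nomin; exists m => // a Aa.
  by rewrite leNgt; apply/negP => am; apply: h; exists a.
have [D' sD cov] : finite_subset_cover A (fun a => `]a, +oo[%classic) A.
  apply: (@my_compact_cover _ a0 A cA X A (fun a => `]a, +oo[%classic)).
    by move=> i _; exact: rray_open.
  move=> m Am; have [a Aa am] := hA m Am; exists a => //=.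
  by rewrite in_itv /= am.
have [i Di _] := cov a0 Aa0.
have [m mD mmin] := seq_min D' i Di.
have Am : A m by move: (sD m mD); rewrite in_setE.
have [j Dj /=] := cov m Am; rewrite in_itv /= andbT => jm.
by have := mmin j Dj; rewrite leNgt jm.
Qed.
Lemma compact_max (A : set X) : compact A -> A !=set0 ->
  exists2 m, A m & forall a, A a -> a <= m.
Proof.
move=> cA [a0 Aa0]; apply: contrapT => nomin.
have hA : forall m, A m -> exists2 a, A a & m < a.
  move=> m Am; apply: contrapT => h; apply: nomin; exists m => // a Aa.
  by rewrite leNgt; apply/negP => am; apply: h; exists a.
have [D' sD cov] : finite_subset_cover A (fun a => `]-oo, a[%classic) A.
  apply: (@my_compact_cover _ a0 A cA X A (fun a => `]-oo, a[%classic)).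
    by move=> i _; exact: lray_open.
  move=> m Am; have [a Aa am] := hA m Am; exists a => //=.
have [i Di _] := cov a0 Aa0.
have [m mD mmin] := seq_max D' i Di.
have Am : A m by move: (sD m mD); rewrite in_setE.
have [j Dj /=] := cov m Am; rewrite in_itv /= => jm.
by have := mmin j Dj; rewrite leNgt jm.
Qed.
End MinMax.

Section S.
Context {d : Order.disp_t} {X : orderTopologicalType d}.
Lemma nbhs_right (x : X) (W : set X) : nbhs x W ->
  (exists2 v, x < v & forall z, x <= z -> z < v -> W z) \/ (forall z, x <= z -> W z).
Proof.
rewrite itv_nbhsE => -[i [oi xi] iW].
case: i oi xi iW => [[[]l|[]] [[]r|[]]] //= oi xi iW.
all: rewrite /itv_open_ends /= in oi.
all: try by [].
all: rewrite ?in_itv /= ?andbT in xi.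
- case/andP: xi => lx xr; left; exists r => // z xz zr; apply: iW.
  by rewrite /= in_itv /= zr (lt_le_trans lx xz).
- right => z xz; apply: iW.
  by rewrite /= in_itv /= andbT (lt_le_trans xi xz).
- left; exists r => // z xz zr; apply: iW.
  by rewrite /= in_itv /= zr.
- by right => z _; apply: iW; rewrite /= in_itv.
Qed.
Lemma nbhs_left (x : X) (W : set X) : nbhs x W ->
  (exists2 v, v < x & forall z, z <= x -> v < z -> W z) \/ (forall z, z <= x -> W z).
Proof.
rewrite itv_nbhsE => -[i [oi xi] iW].
case: i oi xi iW => [[[]l|[]] [[]r|[]]] //= oi xi iW.
all: rewrite /itv_open_ends /= in oi.
all: try by [].
all: rewrite ?in_itv /= ?andbT in xi.
- case/andP: xi => lx xr; left; exists l => // z zx lz; apply: iW.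
  by rewrite /= in_itv /= lz (le_lt_trans zx xr).
- left; exists l => // z zx lz; apply: iW.
  by rewrite /= in_itv /= lz.
- right => z zx; apply: iW.
  by rewrite /= in_itv /= (le_lt_trans zx xi).
- by right => z _; apply: iW; rewrite /= in_itv.
Qed.
End S.
Section Seqs.
Context {d : Order.disp_t} {X : orderTopologicalType d}.

Definition fc (x : X) := exists B : nat -> set X,
  (forall n, nbhs x (B n)) /\ (forall W, nbhs x W -> exists n, B n `<=` W).

Lemma right_seq (a : X) : fc a -> exists P : nat -> X,
  (forall n m, (n <= m)%N -> P m <= P n) /\
  ((exists y, a < y) -> forall n, a < P n) /\
  (forall y, a < y -> exists n, P n <= y).
Proof.
move=> [B [Bn Bb]].
case: (pselect (exists y, a < y)) => [[y0 ay0]|noy]; last first.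
  exists (fun _ => a); split => [//|]; split => [[y ay]|y ay]; exfalso; apply: noy; by exists y.
have hP : forall n, exists p, a < p /\
    (forall y, a < y -> B n `<=` `]-oo, y[ -> p <= y).
  move=> n; case: (nbhs_right _ _ (Bn n)) => [[v av avW]|allW].
  - case: (pselect (exists z, a < z /\ z < v)) => [[z [az zv]]|noz].
    + exists z; split => // y ay By.
      have : `]-oo, y[%classic z by apply: By; apply: avW => //; exact: ltW.
      by rewrite /= in_itv /= => zy; exact: ltW.
    + exists v; split => // y ay _; rewrite leNgt; apply/negP => yv.
      by apply: noz; exists y.
  - exists y0; split => // y ay By.
    have : `]-oo, y[%classic y0 by apply: By; apply: allW; exact: ltW.
    by rewrite /= in_itv /= => zy; exact: ltW.
have [P' hP'] := choice hP.
pose Pm := fix f n := if n is k.+1 then Order.min (f k) (P' k.+1) else P' 0.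
have PmP : forall n, Pm n <= P' n.
  by case => [|k] //=; rewrite ge_min lexx orbT.
exists Pm; split; [|split].
- move=> n m; elim: m => [|m IH]; first by rewrite leqn0 => /eqP->.
  rewrite leq_eqVlt => /orP[/eqP<-//|]; rewrite ltnS => nm.
  by apply: le_trans (IH nm); rewrite /= ge_min lexx.
- move=> _; elim => [|k IH] /=; first by have [] := hP' 0%N.
  by rewrite lt_min IH; have [] := hP' k.+1.
- move=> y ay.
  have : nbhs a `]-oo, y[%classic by have := lray_open y; rewrite openE => /(_ a); apply; rewrite /= in_itv /= ay.
  move=> /Bb [n Bny]; exists n; apply: le_trans (PmP n) _.
  by have [_] := hP' n; apply.
Qed.

Lemma left_seq (b : X) : fc b -> exists Q : nat -> X,
  (forall n m, (n <= m)%N -> Q n <= Q m) /\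
  ((exists y, y < b) -> forall n, Q n < b) /\
  (forall y, y < b -> exists n, y <= Q n).
Proof.
move=> [B [Bn Bb]].
case: (pselect (exists y, y < b)) => [[y0 ay0]|noy]; last first.
  exists (fun _ => b); split => [//|]; split => [[y ay]|y ay]; exfalso; apply: noy; by exists y.
have hP : forall n, exists p, p < b /\
    (forall y, y < b -> B n `<=` `]y, +oo[ -> y <= p).
  move=> n; case: (nbhs_left _ _ (Bn n)) => [[v av avW]|allW].
  - case: (pselect (exists z, v < z /\ z < b)) => [[z [az zv]]|noz].
    + exists z; split => // y ay By.
      have : `]y, +oo[%classic z by apply: By; apply: avW => //; exact: ltW.
      by rewrite /= in_itv /= andbT => zy; exact: ltW.
    + exists v; split => // y ay _; rewrite leNgt; apply/negP => yv.
      by apply: noz; exists y.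
  - exists y0; split => // y ay By.
    have : `]y, +oo[%classic y0 by apply: By; apply: allW; exact: ltW.
    by rewrite /= in_itv /= andbT => zy; exact: ltW.
have [P' hP'] := choice hP.
pose Pm := fix f n := if n is k.+1 then Order.max (f k) (P' k.+1) else P' 0.
have PmP : forall n, P' n <= Pm n.
  by case => [|k] //=; rewrite le_max lexx orbT.
exists Pm; split; [|split].
- move=> n m; elim: m => [|m IH]; first by rewrite leqn0 => /eqP->.
  rewrite leq_eqVlt => /orP[/eqP<-//|]; rewrite ltnS => nm.
  by apply: le_trans (IH nm) _; rewrite /= le_max lexx.
- move=> _; elim => [|k IH] /=; first by have [] := hP' 0%N.
  by rewrite gt_max IH; have [] := hP' k.+1.
- move=> y ay.
  have : nbhs b `]y, +oo[%classic by have := rray_open y; rewrite openE => /(_ b); apply; rewrite /= in_itv /= ay.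
  move=> /Bb [n Bny]; exists n; apply: le_trans _ (PmP n).
  by have [_] := hP' n; apply.
Qed.
End Seqs.

Section Gaps.
Context {d : Order.disp_t} {X : orderTopologicalType d}.
Implicit Types (C : set X) (g : option X * option X).

Definition lo_lt (a : option X) (x : X) : Prop := if a is Some a' then a' < x else True.
Definition hi_gt (b : option X) (x : X) : Prop := if b is Some b' then x < b' else True.
Definition Og g := [set x | lo_lt g.1 x /\ hi_gt g.2 x].
Definition isgap C g := [/\ (forall a, g.1 = Some a -> C a),
  (forall b, g.2 = Some b -> C b), (forall c, C c -> ~ Og g c) & Og g !=set0].

Lemma Og_open g : open (Og g).
Proof.
case: g => [[a|] [b|]].
- have -> : Og (Some a, Some b) = (`]a, +oo[ `&` `]-oo, b[)%classic.
    by apply/seteqP; split => x /=; rewrite ?in_itv /= ?andbT; firstorder.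
  by apply: openI; [exact: rray_open|exact: lray_open].
- have -> : Og (Some a, None) = `]a, +oo[%classic.
    by apply/seteqP; split => x /=; rewrite ?in_itv /= ?andbT; firstorder.
  exact: rray_open.
- have -> : Og (None, Some b) = `]-oo, b[%classic.
    by apply/seteqP; split => x /=; rewrite ?in_itv /= ?andbT; firstorder.
  exact: lray_open.
- have -> : Og (None, None) = setT by apply/seteqP; split => x.
  exact: openT.
Qed.

Lemma gap_lo {C g x c} : isgap C g -> Og g x -> C c -> c < x ->
  exists2 a, g.1 = Some a & c <= a.
Proof.
case: g => [a b] [_ _ hC _] [/= hl hh] Cc cx.
have hhc : hi_gt b c by case: b hh {hC} => //= b xb; exact: lt_trans xb.
case: a hl hC => [a|] /= hl hC.
  exists a => //; rewrite leNgt; apply/negP => ac; exact: (hC c Cc).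
by exfalso; apply: (hC c Cc).
Qed.

Lemma gap_hi {C g x c} : isgap C g -> Og g x -> C c -> x < c ->
  exists2 b, g.2 = Some b & b <= c.
Proof.
case: g => [a b] [_ _ hC _] [/= hl hh] Cc cx.
have hlc : lo_lt a c by case: a hl {hC} => //= a xb; exact: lt_trans cx.
case: b hh hC => [b|] /= hh hC.
  exists b => //; rewrite leNgt; apply/negP => ac; exact: (hC c Cc).
by exfalso; apply: (hC c Cc).
Qed.

Lemma gap_unique C g g' x : isgap C g -> isgap C g' -> Og g x -> Og g' x -> g = g'.
Proof.
move=> gg gg' Ox Ox'.
have e1 : g.1 = g'.1.
  case E: g.1 => [a|]; case E': g'.1 => [a'|] //.
  - have Ca : C a by case: gg => + _ _ _; apply.
    have Ca' : C a' by case: gg' => + _ _ _; apply.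
    have ax : a < x by case: Ox; rewrite E.
    have ax' : a' < x by case: Ox'; rewrite E'.
    have [a1 E1 h1] := gap_lo gg' Ox' Ca ax; move: E1; rewrite E' => -[?]; subst a1.
    have [a2 E2 h2] := gap_lo gg Ox Ca' ax'; move: E2; rewrite E => -[?]; subst a2.
    by congr Some; apply/le_anti; rewrite h1 h2.
  - have Ca : C a by case: gg => + _ _ _; apply.
    have ax : a < x by case: Ox; rewrite E.
    by have [a1 + _] := gap_lo gg' Ox' Ca ax; rewrite E'.
  - have Ca' : C a' by case: gg' => + _ _ _; apply.
    have ax' : a' < x by case: Ox'; rewrite E'.
    by have [a1 + _] := gap_lo gg Ox Ca' ax'; rewrite E.
have e2 : g.2 = g'.2.
  case E: g.2 => [a|]; case E': g'.2 => [a'|] //.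
  - have Ca : C a by case: gg => _ + _ _; apply.
    have Ca' : C a' by case: gg' => _ + _ _; apply.
    have ax : x < a by case: Ox; rewrite E.
    have ax' : x < a' by case: Ox'; rewrite E'.
    have [a1 E1 h1] := gap_hi gg' Ox' Ca ax; move: E1; rewrite E' => -[?]; subst a1.
    have [a2 E2 h2] := gap_hi gg Ox Ca' ax'; move: E2; rewrite E => -[?]; subst a2.
    by congr Some; apply/le_anti; rewrite h1 h2.
  - have Ca : C a by case: gg => _ + _ _; apply.
    have ax : x < a by case: Ox; rewrite E.
    by have [a1 + _] := gap_hi gg' Ox' Ca ax; rewrite E'.
  - have Ca' : C a' by case: gg' => _ + _ _; apply.
    have ax' : x < a' by case: Ox'; rewrite E'.
    by have [a1 + _] := gap_hi gg Ox Ca' ax'; rewrite E.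
by case: g g' e1 e2 {gg gg' Ox Ox'} => [? ?] [? ?] /= -> ->.
Qed.

Lemma gap_exists C x : compact C -> ~ C x -> exists g, isgap C g /\ Og g x.
Proof.
move=> cC nCx.
have [a [ha1 ha2 ha3]] : exists a : option X, [/\ lo_lt a x,
    (forall a', a = Some a' -> C a') & (forall c, C c -> c < x -> ~ lo_lt a c)].
  case: (pselect (exists c, C c /\ c < x)) => [[c [Cc cx]]|no].
    have cK : compact (C `&` `]-oo, x]) by apply: compact_closedI => //; exact: lray_closed.
    have [|m [Cm mx] mmax] := compact_max _ cK.
      by exists c; split => //; rewrite /= in_itv /= ltW.
    move: mx; rewrite /= in_itv /= => mx.
    have mx' : m < x by rewrite lt_neqAle mx andbT; apply/eqP => mxe; apply: nCx; rewrite -mxe.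
    exists (Some m); split => //=; first by move=> a' [<-].
    move=> c' Cc' c'x /= mc; have : c' <= m by apply: mmax; split => //; rewrite /= in_itv /= ltW.
    by rewrite leNgt mc.
  by exists None; split => // c Cc cx _; apply: no; exists c.
have [b [hb1 hb2 hb3]] : exists b : option X, [/\ hi_gt b x,
    (forall b', b = Some b' -> C b') & (forall c, C c -> x < c -> ~ hi_gt b c)].
  case: (pselect (exists c, C c /\ x < c)) => [[c [Cc cx]]|no].
    have cK : compact (C `&` `[x, +oo[) by apply: compact_closedI => //; exact: rray_closed.
    have [|m [Cm mx] mmax] := compact_min _ cK.
      by exists c; split => //; rewrite /= in_itv /= ltW.
    move: mx; rewrite /= in_itv /= andbT => mx.
    have mx' : x < m by rewrite lt_neqAle mx andbT; apply/eqP => mxe; apply: nCx; rewrite mxe.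
    exists (Some m); split => //=; first by move=> a' [<-].
    move=> c' Cc' c'x /= mc; have : m <= c' by apply: mmax; split => //; rewrite /= in_itv /= andbT ltW.
    by rewrite leNgt mc.
  by exists None; split => // c Cc cx _; apply: no; exists c.
exists (a, b); split; last by split.
split => //; last by exists x.
move=> c Cc [/= hl hh].
have [cx|xc|cxe] := ltgtP c x.
- exact: (ha3 c Cc cx).
- exact: (hb3 c Cc xc).
- by apply: nCx; rewrite -cxe.
Qed.
End Gaps.

Lemma fin_bound (T : eqType) (s : seq T) (R : T -> nat -> Prop) :
  (forall g n m, (n <= m)%N -> R g n -> R g m) ->
  (forall g, g \in s -> exists n, R g n) -> exists n, forall g, g \in s -> R g n.
Proof.
move=> mono; elim: s => [|x s IH] h; first by exists 0%N.
have [n1 h1] := h x (mem_head _ _).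
have [n2 h2] := IH (fun g gs => h g (mem_behead (s := x :: s) gs)).
exists (maxn n1 n2) => g; rewrite inE => /orP[/eqP->|gs].
  exact: mono (leq_maxl _ _) h1.
exact: mono (leq_maxr _ _) (h2 g gs).
Qed.

Section Base.
Context {d : Order.disp_t} {X : orderTopologicalType d}.
Context (C : set X) (P Q : X -> nat -> X).
Context (Pmono : forall a n m, (n <= m)%N -> P a m <= P a n)
 (Ppos : forall a, (exists y, a < y) -> forall n, a < P a n)
 (Papp : forall a y, a < y -> exists n, P a n <= y)
 (Qmono : forall b n m, (n <= m)%N -> Q b n <= Q b m)
 (Qpos : forall b, (exists y, y < b) -> forall n, Q b n < b)
 (Qapp : forall b y, y < b -> exists n, y <= Q b n).

Definition Dlo (a : option X) n : set X :=
  if a is Some a' then `[P a' n, +oo[%classic else setT.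
Definition Dhi (b : option X) n : set X :=
  if b is Some b' then `]-oo, Q b' n]%classic else setT.
Definition Dg (g : option X * option X) n : set X := (Dlo g.1 n `&` Dhi g.2 n)%classic.
Definition Ufun (G : {fset (option X * option X)}) n :=
  (~` \bigcup_(g in [set` G]) Dg g n)%classic.
Definition Fam := [set U | exists (G : {fset (option X * option X)}) (n : nat),
  (forall g, g \in G -> isgap C g) /\ U = Ufun G n].

Lemma Dg_closed g n : closed (Dg g n).
Proof.
apply: closedI.
  by case: g.1 => [a|] /=; [exact: rray_closed|exact: closedT].
by case: g.2 => [a|] /=; [exact: lray_closed|exact: closedT].
Qed.

Lemma Dg_mono g n m : (n <= m)%N -> Dg g n `<=` Dg g m.
Proof.
move=> nm x [hl hh]; split.
  case: g.1 hl => [a|] //=; rewrite !in_itv /= !andbT => h.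
  exact: le_trans (Pmono _ _ _ nm) h.
case: g.2 hh => [a|] //=; rewrite !in_itv /= => h.
exact: le_trans h (Qmono _ _ _ nm).
Qed.

Lemma Dg_Og g n : isgap C g -> Dg g n `<=` Og g.
Proof.
case=> _ _ _ [y [hy1 hy2]] x [hl hh]; split.
  case: g.1 hl hy1 => [a|] //=; rewrite !in_itv /= !andbT => h ay.
  by apply: lt_le_trans h; apply: Ppos; exists y.
case: g.2 hh hy2 => [a|] //=; rewrite !in_itv /= => h ay.
by apply: le_lt_trans h _; apply: Qpos; exists y.
Qed.

Lemma Ufun_open G n : open (Ufun G n).
Proof.
rewrite openC; apply: closed_bigcup => // g _; exact: Dg_closed.
Qed.

Lemma C_Ufun G n : (forall g, g \in G -> isgap C g) -> C `<=` Ufun G n.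
Proof.
move=> hG c Cc [g Gg Dc].
have gg := hG g Gg.
have := Dg_Og g n gg c Dc; case: gg => _ _ + _; apply; exact Cc.
Qed.

Lemma per_gap_lo (K : set X) a : compact K -> (forall x, K x -> ~ C x) -> C a ->
  exists n, forall y, K y -> a < y -> P a n <= y.
Proof.
move=> cK KC Ca.
case: (pselect ((K `&` `[a, +oo[%classic) !=set0)) => [ne|em].
- have cK' : compact (K `&` `[a, +oo[%classic).
    by apply: compact_closedI => //; exact: rray_closed.
  have [m [Km am] mmin] := compact_min _ cK' ne.
  move: am; rewrite /= in_itv /= andbT => am.
  have am' : a < m.
    rewrite lt_neqAle am andbT; apply/eqP => e; apply: (KC m Km); by rewrite -e.
  have [n hn] := Papp _ _ am'; exists n => y Ky ay.
  apply: le_trans hn (mmin y _); split => //.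
  by rewrite /= in_itv /= andbT ltW.
- exists 0%N => y Ky ay; exfalso; apply: em; exists y; split => //.
  by rewrite /= in_itv /= andbT ltW.
Qed.

Lemma per_gap_hi (K : set X) b : compact K -> (forall x, K x -> ~ C x) -> C b ->
  exists n, forall y, K y -> y < b -> y <= Q b n.
Proof.
move=> cK KC Cb.
case: (pselect ((K `&` `]-oo, b]%classic) !=set0)) => [ne|em].
- have cK' : compact (K `&` `]-oo, b]%classic).
    by apply: compact_closedI => //; exact: lray_closed.
  have [m [Km am] mmin] := compact_max _ cK' ne.
  move: am; rewrite /= in_itv /= => am.
  have am' : m < b.
    rewrite lt_neqAle am andbT; apply/eqP => e; apply: (KC m Km); by rewrite e.
  have [n hn] := Qapp _ _ am'; exists n => y Ky ay.
  apply: le_trans (mmin y _) hn; split => //.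
  by rewrite /= in_itv /= ltW.
- exists 0%N => y Ky ay; exfalso; apply: em; exists y; split => //.
  by rewrite /= in_itv /= ltW.
Qed.

Lemma per_gap (K : set X) g : compact K -> (forall x, K x -> ~ C x) -> isgap C g ->
  exists n, forall y, K y -> Og g y -> Dg g n y.
Proof.
move=> cK KC [ga gb _ _].
have [n1 h1] : exists n, forall y, K y -> Og g y -> Dlo g.1 n y.
  case E: g.1 => [a|]; last by exists 0%N.
  have [n hn] := per_gap_lo K a cK KC (ga a E).
  exists n => y Ky [+ _]; rewrite E /= => ay.
  by rewrite in_itv /= andbT; apply: hn.
have [n2 h2] : exists n, forall y, K y -> Og g y -> Dhi g.2 n y.
  case E: g.2 => [b|]; last by exists 0%N.
  have [n hn] := per_gap_hi K b cK KC (gb b E).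
  exists n => y Ky [_ +]; rewrite E /= => ay.
  by rewrite in_itv /=; apply: hn.
exists (maxn n1 n2) => y Ky Oy; split.
  have := h1 y Ky Oy; case: g.1 => [a|] //=; rewrite !in_itv /= !andbT => h.
  exact: le_trans (Pmono _ _ _ (leq_maxl n1 n2)) h.
have := h2 y Ky Oy; case: g.2 => [a|] //=; rewrite !in_itv /= => h.
exact: le_trans h (Qmono _ _ _ (leq_maxr n1 n2)).
Qed.

Lemma fam_base : compact [set: X] -> compact C -> nbhd_base C Fam.
Proof.
move=> cX cC; split.
  by move=> U [G [n [hG ->]]]; split; [exact: Ufun_open|exact: C_Ufun].
move=> W oW CW.
pose K := (~` W)%classic.
have cK : compact K.
  by apply: (subclosed_compact _ cX) => //; rewrite /K -openC setCK.
have KC : forall x, K x -> ~ C x by move=> x Kx Cx; apply: Kx; exact: CW.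
case: (pselect (K !=set0)) => [[k0 Kk0]|Kem]; last first.
  exists (Ufun fset0 0); first by exists fset0, 0%N; split => // g; rewrite inE.
  by move=> x _; apply: contrapT => nW; apply: Kem; exists x.
have [G sG cov] : finite_subset_cover (isgap C) Og K.
  apply: (@my_compact_cover _ k0 K cK _ (isgap C) Og).
    by move=> g _; exact: Og_open.
  move=> x Kx; have [g [gg Ogx]] := gap_exists C x cC (KC x Kx).
  by exists g.
have hG : forall g, g \in G -> isgap C g.
  by move=> g Gg; move: (sG g Gg); rewrite in_setE.
have [n hn] : exists n, forall g, g \in G -> forall y, K y -> Og g y -> Dg g n y.
  apply: (@fin_bound _ G (fun g n => forall y, K y -> Og g y -> Dg g n y)).
    by move=> g n m nm h y Ky Oy; apply: (Dg_mono g n m nm); apply: h.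
  by move=> g Gg; apply: per_gap => //; exact: hG.
exists (Ufun G n); first by exists G, n.
move=> x Ux; apply: contrapT => nWx; apply: Ux.
have [g Gg Ogx] := cov x nWx.
by exists g => //; apply: hn.
Qed.

Lemma fam_oplike : op_like nat Fam.
Proof.
move=> U [G [n [hG ->]]]; apply/finite_setPn.
apply: (sub_finite_set _ (finite_image2 (fun H k => Ufun H k) (finite_fset (fpowerset G)) (finite_II n.+1))).
move=> V [[G' [m [hG' ->]]] sub].
exists (G' `&` G)%fset; first by rewrite /= fpowersetE fsubsetIr.
exists (minn m n); first by rewrite /= ltnS geq_minr.
apply/seteqP; split => x.
- move=> nH [g G'g Dgm]; apply: nH.
  have nU : ~ Ufun G n x by move=> Ux; have := sub x Ux; apply; exists g.
  have [h Gh Dhn] : (\bigcup_(g in [set` G]) Dg g n)%classic x by apply: contrapT.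
  have e : g = h.
    exact: (gap_unique _ _ _ _ (hG' g G'g) (hG h Gh) (Dg_Og g m (hG' g G'g) x Dgm) (Dg_Og h n (hG h Gh) x Dhn)).
  subst h; exists g; first by rewrite /= inE G'g Gh.
  by rewrite /minn; case: ifP.
- move=> nG' [g Hg Dgk]; apply: nG'; exists g.
    by move: Hg; rewrite /= inE => /andP[].
  exact: (Dg_mono g _ _ (geq_minl m n)).
Qed.
End Base.

Section FC.
Context {d : Order.disp_t} {X : orderTopologicalType d}.

Lemma fc_transport (f g : X -> X) x : continuous f -> continuous g ->
  cancel f g -> cancel g f -> fc x -> fc (f x).
Proof.
move=> cf cg fg gf [B [Bn Bb]].
exists (fun n => f @` B n); split.
- move=> n.
  have : nbhs (f x) (g @^-1` B n).
    have : nbhs (g (f x)) (B n) by rewrite fg; exact: Bn.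
    by move=> /(cg (f x)).
  apply: filterS => z Bz; exists (g z) => //; exact: gf.
- move=> W Wn.
  have : nbhs x (f @^-1` W) by apply: cf.
  move=> /Bb [n Bn']; exists n => _ [z Bz <-]; exact: Bn' z Bz.
Qed.

Lemma fc_all : compact [set: X] -> homogeneous X -> forall x : X, fc x.
Proof.
move=> cX hom x.
have tr : forall y : X, fc y -> fc x.
  move=> y fy; have := hom y x; move=> [f [g [cf [cg [fg [gf fyx]]]]]].
  rewrite -fyx; exact: (fc_transport f g y cf cg fg gf fy).
case: (pselect (exists z : X, nbhs z [set z])) => [[z zi]|noiso].
  apply: (tr z); exists (fun _ => [set z]); split => // W Wz.
  by exists 0%N => _ ->; exact: nbhs_singleton.
have [ o0 _ omin ] := compact_min _ cX (ex_intro _ x I).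
apply: (tr o0).
have key : forall V, nbhs o0 V -> exists w, o0 < w /\ V w.
  move=> V oV; apply: contrapT => nw; apply: noiso; exists o0.
  apply: filterS oV => w Vw.
  have := omin w I; rewrite le_eqVlt => /orP[/eqP->//|ow].
  by exfalso; apply: nw; exists w.
have [v0 [ov0 _]] := key setT filterT.
have h1 : forall v, exists w, o0 < v -> o0 < w /\ w < v.
  move=> v; case: (pselect (o0 < v)) => ov; last by exists o0.
  have : nbhs o0 `]-oo, v[%classic.
    by have := lray_open v; rewrite openE => /(_ o0); apply; rewrite /= in_itv /= ov.
  move=> /key [w [ow wv]]; exists w => _; split => //; move: wv; by rewrite /= in_itv.
have [nxt hnxt] := choice h1.
pose s n := iter n nxt v0.
have spos : forall n, o0 < s n.
  elim => [|n IH] //=; by have [] := hnxt (s n) IH.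
have sdec : forall n, s n.+1 < s n.
  by move=> n /=; have [] := hnxt (s n) (spos n).
have snoninc : forall k m, (k <= m)%N -> s m <= s k.
  move=> k; elim => [|m IH]; first by rewrite leqn0 => /eqP->.
  rewrite leq_eqVlt => /orP[/eqP<-//|]; rewrite ltnS => km.
  exact: le_trans (ltW (sdec m)) (IH km).
have [y [_ cy]] := cX (s @ \oo) _ filterT.
have sny : forall n, s n <> y.
  move=> k sky.
  have : ([set z | z <= s k.+1] `&` `]s k.+1, +oo[%classic) !=set0.
    apply: cy.
      by exists k.+1 => // m /= km; exact: (snoninc k.+1 m km).
    rewrite -sky; have := rray_open (s k.+1); rewrite openE; apply.
    by rewrite /= in_itv /= andbT sdec.
  by move=> [z [/= zs]]; rewrite in_itv /= andbT => sz; move: zs; rewrite leNgt sz.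
have [f [g [cf [cg [fg [gf fyo]]]]]] := hom y o0.
have fpos : forall n, o0 < f (s n).
  move=> n; rewrite lt_neqAle omin // andbT; apply/eqP => e.
  by apply: (sny n); rewrite -(fg (s n)) -e -fyo fg.
exists (fun n => `]-oo, f (s n)[%classic); split.
  move=> n; have := lray_open (f (s n)); rewrite openE; apply.
  by rewrite /= in_itv /= fpos.
move=> W oW; case: (nbhs_right _ _ oW) => [[v ov vW]|allW].
  have : nbhs y (f @^-1` `]-oo, v[%classic).
    apply: (cf y); rewrite fyo.
    by have := lray_open v; rewrite openE; apply; rewrite /= in_itv /= ov.
  have Fr : (s @ \oo) (range s) by exists 0%N => // m _; exists m.
  move=> /(cy _ _ Fr) [z [[n _ <-]]]; rewrite /= in_itv /= => fsv.
  exists n => z'; rewrite /= in_itv /= => z'lt; apply: vW; first exact: omin.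
  exact: lt_trans z'lt fsv.
by exists 0%N => z _; apply: allW; exact: omin.
Qed.
End FC.

Theorem theorem2p32 (d : Order.disp_t) (X : orderTopologicalType d) :
  compact [set: X] -> homogeneous X -> chiKNt_le X nat.
Proof.
move=> cX hom C cC.
have fca := fc_all cX hom.
have [P hP] := choice (fun a => right_seq a (fca a)).
have [Q hQ] := choice (fun b => left_seq b (fca b)).
have Pmono : forall a n m, (n <= m)%N -> P a m <= P a n by move=> a; case: (hP a).
have Ppos : forall a, (exists y, a < y) -> forall n, a < P a n by move=> a; case: (hP a) => _ [].
have Papp : forall a y, a < y -> exists n, P a n <= y by move=> a; case: (hP a) => _ [].
have Qmono : forall b n m, (n <= m)%N -> Q b n <= Q b m by move=> a; case: (hQ a).
have Qpos : forall b, (exists y, y < b) -> forall n, Q b n < b by move=> a; case: (hQ a) => _ [].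
have Qapp : forall b y, y < b -> exists n, y <= Q b n by move=> a; case: (hQ a) => _ [].
exists (Fam C P Q); split.
  by apply: fam_base.
by apply: fam_oplike.
Qed.
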